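(* Let $F$ be a field, $R$ a Hopf $F$-algebra, and let $T=R[x;\sigma,\delta]$ be a Hopf $F$-algebra containing $R$ as a Hopf subalgebra, where $\sigma$ is an $F$-algebra automorphism of $R$ and $\delta$ a $\sigma$-derivation of $R$. Suppose that $R\otimes R$ is a domain. Then $$\Delta(x)=s(1\otimes x)+t(x\otimes 1)+v(x\otimes x)+w$$ for some $s,t,v,w\in R\otimes R$.
   Context: Hopf algebras have bijective antipode. $R[x;\sigma,\delta]$ is the skew polynomial algebra generated by $R$ and $x$ with $xr-\sigma(r)x=\delta(r)$ for $r\in R$, where $\delta(ab)=\delta(a)b+\sigma(a)\delta(b)$. *)

(* Defs.v *)
From HB Require Import structures.
From mathcomp Require Import all_boot all_order all_algebra.
Set Implicit Arguments. Unset Strict Implicit. Unset Printing Implicit Defensive.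
Import Order.TTheory GRing.Theory.
Local Open Scope ring_scope.

Section Defs.
Variable F : fieldType.

Definition bilinear_map (U V W : lmodType F) (f : U -> V -> W) : Prop :=
  (forall v, linear (fun u => f u v)) /\ (forall u, linear (f u)).

Definition is_tensor (U V X : lmodType F) (tp : U -> V -> X) : Prop :=
  bilinear_map tp /\
  forall (Y : lmodType F) (f : U -> V -> Y), bilinear_map f ->
    exists h : X -> Y, [/\ linear h, (forall u v, h (tp u v) = f u v) &
      forall h' : X -> Y, linear h' -> (forall u v, h' (tp u v) = f u v) ->
        forall z, h' z = h z].

Definition is_tensor_algebra (T TT : algType F) (tp : T -> T -> TT) : Prop :=
  [/\ is_tensor tp, tp 1 1 = 1 &
      forall a b c d, tp a b * tp c d = tp (a * c) (b * d)].

(** [TTT] is the triple tensor product, viewed both as [(T⊗T)⊗T] via [tpL]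
    and as [T⊗(T⊗T)] via [tpR], compatibly (associativity isomorphism). *)
Definition is_triple_tensor (T TT : algType F) (tp : T -> T -> TT)
    (TTT : lmodType F) (tpL : TT -> T -> TTT) (tpR : T -> TT -> TTT) : Prop :=
  [/\ is_tensor tpL, is_tensor tpR &
      forall a b c, tpL (tp a b) c = tpR a (tp b c)].

(** Hopf algebra structure (comultiplication [D], counit [eps], antipode [S])
    on [T], with bijective antipode (standing convention of the paper). *)
Definition hopf_algebra (T TT : algType F) (tp : T -> T -> TT)
    (TTT : lmodType F) (tpL : TT -> T -> TTT) (tpR : T -> TT -> TTT)
    (D : T -> TT) (eps : T -> F) (S : T -> T) : Prop :=
  [/\
      linear D /\ D 1 = 1 /\ (forall a b, D (a * b) = D a * D b),
      (forall k a b, eps (k *: a + b) = k * eps a + eps b) /\ eps 1 = 1 /\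
        (forall a b, eps (a * b) = eps a * eps b),
      (* coassociativity: (D ⊗ id) D = (id ⊗ D) D *)
      (forall h1 h2 : TT -> TTT, linear h1 -> linear h2 ->
        (forall a b, h1 (tp a b) = tpL (D a) b) ->
        (forall a b, h2 (tp a b) = tpR a (D b)) ->
        forall t, h1 (D t) = h2 (D t)),
      (* counit axioms: (eps ⊗ id) D = id = (id ⊗ eps) D *)
      (forall h1 h2 : TT -> T, linear h1 -> linear h2 ->
        (forall a b, h1 (tp a b) = eps a *: b) ->
        (forall a b, h2 (tp a b) = eps b *: a) ->
        forall t, h1 (D t) = t /\ h2 (D t) = t) &
      (* antipode: m (S ⊗ id) D = eta eps = m (id ⊗ S) D, S linear bijective *)
      [/\ linear S, bijective S &
        forall h1 h2 : TT -> T, linear h1 -> linear h2 ->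
        (forall a b, h1 (tp a b) = S a * b) ->
        (forall a b, h2 (tp a b) = a * S b) ->
        forall t, h1 (D t) = eps t *: 1 /\ h2 (D t) = eps t *: 1]].

(** Elements of the image of [R ⊗ R] inside [T ⊗ T], for [R ⊆ T]. *)
Definition in_tensor (T TT : algType F) (tp : T -> T -> TT) (R : {pred T})
    (z : TT) : Prop :=
  exists s : seq (T * T), all (fun p => (p.1 \in R) && (p.2 \in R)) s /\
    z = \sum_(p <- s) tp p.1 p.2.

(** [R] is a Hopf subalgebra of [T] (its own antipode being bijective). *)
Definition hopf_subalgebra (T TT : algType F) (tp : T -> T -> TT)
    (D : T -> TT) (S : T -> T) (R : {pred T}) : Prop :=
  [/\ subalg_closed R,
      {in R, forall a, in_tensor tp R (D a)},
      {in R, forall a, S a \in R} &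
      {in R, forall b, exists2 a, a \in R & S a = b}].

(** [sg] is an F-algebra automorphism of [R] and [dl] an F-linear
    [sg]-derivation of [R] (both given as maps on the ambient [T]). *)
Definition alg_automorphism_on (T : algType F) (R : {pred T}) (sg : T -> T) :=
  [/\ {in R, forall a, sg a \in R},
      {in R &, injective sg},
      {in R, forall b, exists2 a, a \in R & sg a = b},
      forall k, {in R &, forall a b, sg (k *: a + b) = k *: sg a + sg b} &
      sg 1 = 1 /\ {in R &, forall a b, sg (a * b) = sg a * sg b}].

Definition sigma_derivation_on (T : algType F) (R : {pred T})
    (sg dl : T -> T) :=
  [/\ {in R, forall a, dl a \in R},
      forall k, {in R &, forall a b, dl (k *: a + b) = k *: dl a + dl b} &
      {in R &, forall a b, dl (a * b) = dl a * b + sg a * dl b}].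

Definition is_skew_poly (T : algType F) (R : {pred T}) (sg dl : T -> T)
    (x : T) : Prop :=
  [/\ {in R, forall r, x * r - sg r * x = dl r},
      (forall t, exists n (c : 'I_n -> T),
          (forall i, c i \in R) /\ t = \sum_(i < n) c i * x ^+ i) &
      (forall n (c : 'I_n -> T), (forall i, c i \in R) ->
          \sum_(i < n) c i * x ^+ i = 0 -> forall i, c i = 0)].

Definition tensor_domain (T TT : algType F) (tp : T -> T -> TT)
    (R : {pred T}) : Prop :=
  forall a b, in_tensor tp R a -> in_tensor tp R b -> a * b = 0 ->
    a = 0 \/ b = 0.

End Defs.

(* Main.v *)
Require Import Defs.
From HB Require Import structures.
From mathcomp Require Import all_boot all_order all_algebra.
From Stdlib Require Import ClassicalEpsilon.
Set Implicit Arguments. Unset Strict Implicit. Unset Printing Implicit Defensive.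
Import GRing.Theory.
Local Open Scope ring_scope.

Module MA.

Definition cid {A : Type} {P : A -> Prop} (H : exists x, P x) : {x | P x} :=
  constructive_indefinite_description P H.

Section LinFacts.
Variables (F : fieldType) (U V : lmodType F) (f : U -> V).
Hypothesis Hf : linear f.
Lemma lin0 : f 0 = 0.
Proof. have H := Hf 1 0 0; rewrite !scale1r addr0 in H. by apply/(addrI (f 0)); rewrite -H addr0. Qed.
Lemma linD a b : f (a + b) = f a + f b.
Proof. by have := Hf 1 a b; rewrite !scale1r. Qed.
Lemma linZ k a : f (k *: a) = k *: f a.
Proof. by have := Hf k a 0; rewrite !addr0 lin0 addr0. Qed.
Lemma linN a : f (- a) = - f a.
Proof. by rewrite -scaleN1r linZ scaleN1r. Qed.
Lemma linB a b : f (a - b) = f a - f b.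
Proof. by rewrite linD linN. Qed.
Lemma lin_sum (I : Type) (s : seq I) (P : pred I) (G : I -> U) :
  f (\sum_(i <- s | P i) G i) = \sum_(i <- s | P i) f (G i).
Proof.
elim: s => [|a s IH]; first by rewrite !big_nil lin0.
by rewrite !big_cons; case: (P a); rewrite ?linD IH.
Qed.
End LinFacts.

Section SubAlg.
Variables (F : fieldType) (T : algType F) (R : {pred T}).
Hypothesis HR : subalg_closed R.
Lemma R1 : 1 \in R. Proof. by case: HR. Qed.
Lemma RZD k a b : a \in R -> b \in R -> k *: a + b \in R.
Proof. by case: HR => _ H _ Ha Hb; apply: H. Qed.
Lemma RM a b : a \in R -> b \in R -> a * b \in R.
Proof. by case: HR => _ _ H Ha Hb; apply: H. Qed.
Lemma R0 : 0 \in R.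
Proof. by have := RZD (-1) R1 R1; rewrite scaleN1r addNr. Qed.
Lemma RD a b : a \in R -> b \in R -> a + b \in R.
Proof. by move=> Ha Hb; have := RZD 1 Ha Hb; rewrite scale1r. Qed.
Lemma RZ k a : a \in R -> k *: a \in R.
Proof. by move=> Ha; have := RZD k Ha R0; rewrite addr0. Qed.
Lemma RN a : a \in R -> - a \in R.
Proof. by move=> Ha; rewrite -scaleN1r RZ. Qed.
Lemma RB a b : a \in R -> b \in R -> a - b \in R.
Proof. by move=> Ha Hb; rewrite RD ?RN. Qed.
Lemma Rsum (I : Type) (s : seq I) (P : pred I) (G : I -> T) :
  (forall i, P i -> G i \in R) -> \sum_(i <- s | P i) G i \in R.
Proof.
move=> H; elim: s => [|a s IH]; first by rewrite big_nil R0.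
by rewrite big_cons; case Pa: (P a); rewrite ?RD ?H.
Qed.
Lemma RX a n : a \in R -> a ^+ n \in R.
Proof. by move=> Ha; elim: n => [|n IH]; rewrite ?expr0 ?R1 // exprS RM. Qed.
End SubAlg.

End MA.
Import MA.

Module MB.

Lemma sum_shrink (V : zmodType) (G : nat -> V) N M : (N <= M)%N ->
  (forall i, (N <= i)%N -> G i = 0) -> \sum_(i < M) G i = \sum_(i < N) G i.
Proof.
move=> HNM H; rewrite [RHS](big_ord_widen M G HNM) [RHS]big_mkcond; apply: eq_bigr => i _.
by case: ifP => // /negbT; rewrite -leqNgt => /H ->.
Qed.

Section SkewT.
Variables (F : fieldType) (T : algType F) (R : {pred T}) (sg dl : T -> T) (x : T).
Hypotheses (HR : subalg_closed R) (Hsg : alg_automorphism_on R sg)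
  (Hdl : sigma_derivation_on R sg dl) (Hsk : is_skew_poly R sg dl x).
Let R0 := R0 HR. Let R1 := R1 HR. Let RD := RD HR. Let RZ := RZ HR.
Let RN := RN HR. Let RB := RB HR. Let RM := RM HR.

Lemma exp_nat t : exists n (c : nat -> T),
  (forall i, c i \in R) /\ t = \sum_(i < n) c i * x ^+ i.
Proof.
case: Hsk => _ H _; case: (H t) => n [c [Hc ->]].
exists n, (fun i => if insub i is Some j then c j else 0); split.
  by move=> i; case: insub => [j|]; rewrite ?Hc ?R0.
by apply: eq_bigr => i _; rewrite valK.
Qed.

Lemma uniq_nat n (c : nat -> T) : (forall i, c i \in R) ->
  \sum_(i < n) c i * x ^+ i = 0 -> forall i, (i < n)%N -> c i = 0.
Proof.
case: Hsk => _ _ H Hc Hs i Hi.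
exact: (H n (fun j : 'I_n => c j) (fun j => Hc j) Hs (Ordinal Hi)).
Qed.

Definition ext n (c : nat -> T) i := if (i < n)%N then c i else 0.

Lemma sum_widen n m (c : nat -> T) : (n <= m)%N ->
  \sum_(i < n) c i * x ^+ i = \sum_(i < m) ext n c i * x ^+ i.
Proof.
move=> Hnm; rewrite (big_ord_widen m (fun i => c i * x ^+ i) Hnm) [LHS]big_mkcond; apply: eq_bigr => i _.
by rewrite /ext; case: ifP => //; rewrite mul0r.
Qed.

Lemma extR n c i : (forall i, c i \in R) -> ext n c i \in R.
Proof. by move=> Hc; rewrite /ext; case: ifP; rewrite ?Hc ?R0. Qed.

Lemma uniq2 n m (c c' : nat -> T) : (forall i, c i \in R) -> (forall i, c' i \in R) ->
  \sum_(i < n) c i * x ^+ i = \sum_(i < m) c' i * x ^+ i ->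
  forall i, ext n c i = ext m c' i.
Proof.
move=> Hc Hc' E i.
have Hn := leq_maxl n m; have Hm := leq_maxr n m.
rewrite (sum_widen c Hn) (sum_widen c' Hm) in E.
move/eqP: E; rewrite -subr_eq0 -sumrB => /eqP E.
have E' : \sum_(i < maxn n m) (ext n c i - ext m c' i) * x ^+ i = 0.
  by rewrite -[RHS]E; apply: eq_bigr => j _; rewrite mulrBl.
case: (ltnP i (maxn n m)) => Hi.
  apply/eqP; rewrite -subr_eq0; apply/eqP.
  apply: (@uniq_nat (maxn n m) (fun j => ext n c j - ext m c' j) _ E' i Hi).
  by move=> j; apply: RB => //; apply: extR.
rewrite /ext !ifF //; apply/negbTE; rewrite -leqNgt.
  exact: leq_trans Hm Hi.
exact: leq_trans Hn Hi.
Qed.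

Definition dg t := proj1_sig (cid (exp_nat t)).
Definition cf t := proj1_sig (cid (proj2_sig (cid (exp_nat t)))).
Definition pi i t := ext (dg t) (cf t) i.

Lemma cf_spec t : (forall i, cf t i \in R) /\ t = \sum_(i < dg t) cf t i * x ^+ i.
Proof. rewrite /cf /dg; case: (cid (exp_nat t)) => n Hn /=; by case: (cid Hn). Qed.

Lemma piR i t : pi i t \in R.
Proof. by apply: extR; case: (cf_spec t). Qed.

Lemma pi_uniq n (c : nat -> T) t : (forall i, c i \in R) -> t = \sum_(i < n) c i * x ^+ i ->
  forall i, pi i t = ext n c i.
Proof.
move=> Hc Et i; case: (cf_spec t) => Hcf E; apply: uniq2 => //.
by rewrite -E.
Qed.

Definition dle t a := forall i, (a < i)%N -> pi i t = 0.

Lemma dle_dg t : dle t (dg t).-1.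
Proof.
move=> i Hi; rewrite /pi /ext ifF //; apply/negbTE; rewrite -leqNgt.
by case: (dg t) Hi => // n; rewrite /= ltnS => /ltnW.
Qed.

Lemma pi_ge_dg t i : (dg t <= i)%N -> pi i t = 0.
Proof. by move=> Hi; rewrite /pi /ext ifF //; apply/negbTE; rewrite -leqNgt. Qed.

Lemma pi_expand t N : (forall i, (N <= i)%N -> pi i t = 0) ->
  t = \sum_(i < N) pi i t * x ^+ i.
Proof.
move=> H; case: (cf_spec t) => Hcf E.
rewrite -(@sum_shrink _ (fun i => pi i t * x ^+ i) _ _ (leq_maxl N (dg t))); last first.
  by move=> i Hi; rewrite H ?mul0r.
rewrite (@sum_shrink _ (fun i => pi i t * x ^+ i) _ _ (leq_maxr N (dg t))) //; last first.
  by move=> i Hi; rewrite /pi /ext ifF ?mul0r //; apply/negbTE; rewrite -leqNgt.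
rewrite {1}E; apply: eq_bigr => i _; rewrite /pi /ext ltn_ord //.
Qed.

Lemma pi_expand_dle t a : dle t a -> t = \sum_(i < a.+1) pi i t * x ^+ i.
Proof. by move=> H; apply: pi_expand => i Hi; apply: H. Qed.

Lemma pi_lin i : linear (pi i).
Proof.
move=> k t t'.
set N := maxn (dg t) (dg t').
have Ht : forall i, (N <= i)%N -> pi i t = 0.
  by move=> j Hj; apply: pi_ge_dg; exact: leq_trans (leq_maxl _ _) Hj.
have Ht' : forall i, (N <= i)%N -> pi i t' = 0.
  by move=> j Hj; apply: pi_ge_dg; exact: leq_trans (leq_maxr _ _) Hj.
rewrite (@pi_uniq N (fun i => k *: pi i t + pi i t')); first last.
- rewrite {1}(pi_expand Ht) {1}(pi_expand Ht') scaler_sumr -big_split.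
  by apply: eq_bigr => j _; rewrite scalerAl mulrDl.
- by move=> j; rewrite RD ?RZ ?piR.
rewrite /ext; case: ifP => // /negbT; rewrite -leqNgt => Hi.
by rewrite Ht // Ht' // scaler0 addr0.
Qed.

Lemma piD i t t' : pi i (t + t') = pi i t + pi i t'.
Proof. exact: (linD (pi_lin i)). Qed.
Lemma pi0 i : pi i 0 = 0.
Proof. exact: (lin0 (pi_lin i)). Qed.
Lemma pi_sum i (I : Type) (s : seq I) (P : pred I) (G : I -> T) :
  pi i (\sum_(j <- s | P j) G j) = \sum_(j <- s | P j) pi i (G j).
Proof. exact: (lin_sum (pi_lin i)). Qed.

Lemma pi_Rmul i r t : r \in R -> pi i (r * t) = r * pi i t.
Proof.
move=> Hr; have H : forall i, (dg t <= i)%N -> pi i t = 0.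
  by move=> j Hj; rewrite /pi /ext ifF //; apply/negbTE; rewrite -leqNgt.
rewrite (@pi_uniq (dg t) (fun i => r * pi i t)); first last.
- rewrite {1}(pi_expand H) mulr_sumr; by apply: eq_bigr => j _; rewrite mulrA.
- by move=> j; rewrite RM ?piR.
rewrite /ext; case: ifP => // /negbT; rewrite -leqNgt => Hi.
by rewrite H // mulr0.
Qed.

Lemma pi_mono i j r : r \in R -> pi i (r * x ^+ j) = if i == j then r else 0.
Proof.
move=> Hr; rewrite (@pi_uniq j.+1 (fun k => if k == j then r else 0)).
- rewrite /ext; case: ifP => //; case: eqP => // -> ; by rewrite ltnSn.
- by move=> k; case: ifP; rewrite ?R0.
rewrite big_ord_recr /= eqxx big1 ?add0r // => k _.
by rewrite ifF ?mul0r // ltn_eqF.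
Qed.

Lemma pi_inR i r : r \in R -> pi i r = if i == 0%N then r else 0.
Proof. by move=> Hr; rewrite -(pi_mono i 0 Hr) expr0 mulr1. Qed.

Lemma sgR r : r \in R -> sg r \in R. Proof. by case: Hsg => H _ _ _ _; apply: H. Qed.
Lemma dlR r : r \in R -> dl r \in R. Proof. by case: Hdl => H _ _; apply: H. Qed.
Lemma iter_sgR n r : r \in R -> iter n sg r \in R.
Proof. by move=> Hr; elim: n => //= n IH; apply: sgR. Qed.
Lemma xr r : r \in R -> x * r = sg r * x + dl r.
Proof. by case: Hsk => H _ _ Hr; rewrite -(H r Hr) [RHS]addrC subrK. Qed.

Lemma x_mul t a : dle t a -> dle (x * t) a.+1 /\ pi a.+1 (x * t) = sg (pi a t).
Proof.
move=> H.
pose d i := (if i is j.+1 then sg (pi j t) else 0) +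
            (if (i < a.+1)%N then dl (pi i t) else 0).
have Hd : forall i, d i \in R.
  move=> i; rewrite /d; apply: RD.
    by case: i => [|j]; rewrite ?R0 ?sgR ?piR.
  by case: ifP; rewrite ?R0 ?dlR ?piR.
have E : x * t = \sum_(i < a.+2) d i * x ^+ i.
  rewrite /d; under eq_bigr do rewrite mulrDl.
  rewrite big_split /= [X in X + _]big_ord_recl [X in _ + X]big_ord_recr /= mul0r add0r ltnn mul0r addr0.
  rewrite -big_split /= {1}(pi_expand_dle H) mulr_sumr; apply: eq_bigr => i _.
  rewrite /bump /= add0n add1n ltn_ord mulrA xr ?piR // mulrDl exprS !mulrA //.
have P := pi_uniq Hd E.
split.
  by move=> i Hi; rewrite P /ext ifF //; apply/negbTE; rewrite -leqNgt.
by rewrite P /ext ltnSn /d ltnn addr0.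
Qed.

Lemma x_pow_mul t b i : dle t b ->
  dle (x ^+ i * t) (i + b) /\ pi (i + b) (x ^+ i * t) = iter i sg (pi b t).
Proof.
move=> H; elim: i => [|i [IH1 IH2]]; first by rewrite expr0 mul1r.
rewrite exprS -mulrA addSn; have [H1 H2] := x_mul IH1; split => //; by rewrite H2 IH2.
Qed.

Lemma dle_mono t a b : dle t a -> (a <= b)%N -> dle t b.
Proof. by move=> H Hab i Hi; apply: H; exact: leq_ltn_trans Hab Hi. Qed.

Lemma dle_Rmul r t a : r \in R -> dle t a -> dle (r * t) a.
Proof. by move=> Hr H i Hi; rewrite pi_Rmul // H // mulr0. Qed.

Lemma dle_sum (I : Type) (s : seq I) (P : pred I) (G : I -> T) a :
  (forall j, P j -> dle (G j) a) -> dle (\sum_(j <- s | P j) G j) a.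
Proof. by move=> H i Hi; rewrite pi_sum big1 // => j Pj; apply: H. Qed.

Lemma dle_R r : r \in R -> dle r 0.
Proof. by move=> Hr i Hi; rewrite pi_inR //; case: i Hi. Qed.

Lemma mul_lemma t t' a b : dle t a -> dle t' b ->
  dle (t * t') (a + b) /\ pi (a + b) (t * t') = pi a t * iter a sg (pi b t').
Proof.
move=> Ha Hb; have Et := pi_expand_dle Ha.
have Hterm : forall i : 'I_a.+1, dle (pi i t * x ^+ i * t') (a + b).
  move=> i; rewrite -mulrA; apply: dle_Rmul; first exact: piR.
  by apply: (dle_mono (x_pow_mul i Hb).1); rewrite leq_add2r -ltnS.
split; first by rewrite Et mulr_suml; apply: dle_sum => i _.
rewrite [in LHS]Et mulr_suml pi_sum big_ord_recr /= big1 ?add0r.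
  by rewrite -mulrA pi_Rmul ?piR // (x_pow_mul a Hb).2.
move=> i _; rewrite -mulrA pi_Rmul ?piR // (x_pow_mul i Hb).1 ?mulr0 //.
by rewrite ltn_add2r.
Qed.

End SkewT.

End MB.
Import MB.

Module MC.

Section Tens.
Variables (F : fieldType) (U V X : lmodType F) (tp : U -> V -> X).
Hypothesis Ht : is_tensor tp.

Lemma tp_linl v : linear (tp^~ v). Proof. by case: Ht => [[H _] _]. Qed.
Lemma tp_linr u : linear (tp u). Proof. by case: Ht => [[_ H] _]. Qed.
Lemma tpDl a b v : tp (a + b) v = tp a v + tp b v. Proof. exact: (linD (tp_linl v)). Qed.
Lemma tpDr u a b : tp u (a + b) = tp u a + tp u b. Proof. exact: (linD (tp_linr u)). Qed.
Lemma tpZl k a v : tp (k *: a) v = k *: tp a v. Proof. exact: (linZ (tp_linl v)). Qed.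
Lemma tpZr k u a : tp u (k *: a) = k *: tp u a. Proof. exact: (linZ (tp_linr u)). Qed.
Lemma tp0l v : tp 0 v = 0. Proof. exact: (lin0 (tp_linl v)). Qed.
Lemma tp0r u : tp u 0 = 0. Proof. exact: (lin0 (tp_linr u)). Qed.
Lemma tpNl a v : tp (- a) v = - tp a v. Proof. exact: (linN (tp_linl v)). Qed.
Lemma tpNr u a : tp u (- a) = - tp u a. Proof. exact: (linN (tp_linr u)). Qed.
Lemma tp_suml (I : Type) (s : seq I) (P : pred I) (G : I -> U) v :
  tp (\sum_(i <- s | P i) G i) v = \sum_(i <- s | P i) tp (G i) v.
Proof. exact: (lin_sum (tp_linl v)). Qed.
Lemma tp_sumr (I : Type) (s : seq I) (P : pred I) (G : I -> V) u :
  tp u (\sum_(i <- s | P i) G i) = \sum_(i <- s | P i) tp u (G i).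
Proof. exact: (lin_sum (tp_linr u)). Qed.

Definition lift (Y : lmodType F) (f : U -> V -> Y) (Hf : bilinear_map f) : X -> Y :=
  proj1_sig (cid (proj2 Ht Y f Hf)).

Lemma lift_lin Y f Hf : linear (@lift Y f Hf).
Proof. rewrite /lift; case: cid => h /= [H _ _]; exact: H. Qed.
Lemma lift_tp Y f Hf u v : @lift Y f Hf (tp u v) = f u v.
Proof. rewrite /lift; case: cid => h /= [_ H _]; exact: H. Qed.

Lemma comp_bil (Y : lmodType F) (g : X -> Y) : linear g -> bilinear_map (fun u v => g (tp u v)).
Proof.
move=> Hg; split=> [v|u] k a b /=; first by rewrite tpDl tpZl linD // linZ.
by rewrite tpDr tpZr linD // linZ.
Qed.

Lemma tens_ext (Y : lmodType F) (g g' : X -> Y) : linear g -> linear g' ->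
  (forall u v, g (tp u v) = g' (tp u v)) -> forall z, g z = g' z.
Proof.
move=> Hg Hg' E z; have Hb := comp_bil Hg.
case: Ht => _ /(_ Y _ Hb) [h [Hh Htp Hu]].
by rewrite (Hu g Hg (fun u v => erefl)) (Hu g' Hg' (fun u v => esym (E u v))).
Qed.

Definition spanned z := exists s : seq (U * V), z = \sum_(p <- s) tp p.1 p.2.
Definition spanb : {pred X} :=
  fun z => if excluded_middle_informative (spanned z) then true else false.
Lemma spanbE z : (z \in spanb) <-> spanned z.
Proof.
rewrite unfold_in /spanb; case: excluded_middle_informative => //; split => //.
Qed.

Lemma spanb_closed : submod_closed spanb.
Proof.
split; first by apply/spanbE; exists [::]; rewrite big_nil.
move=> k u v /spanbE [s ->] /spanbE [t ->]; apply/spanbE.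
exists ([seq (k *: p.1, p.2) | p <- s] ++ t).
by rewrite big_cat big_map /= scaler_sumr; congr (_ + _); apply: eq_bigr => p _; rewrite tpZl.
Qed.

HB.instance Definition _ := GRing.isSubmodClosed.Build F X spanb spanb_closed.

Inductive ST : predArgType := STmk z & z \in spanb.
Definition stval (w : ST) : X := let: STmk z _ := w in z.
HB.instance Definition _ := [isSub of ST for stval].
HB.instance Definition _ := [Choice of ST by <:].
HB.instance Definition _ := [SubChoice_isSubZmodule of ST by <:].
HB.instance Definition _ := [SubZmodule_isSubLmodule of ST by <:].

Lemma tp_spanb u v : tp u v \in spanb.
Proof. by apply/spanbE; exists [:: (u, v)]; rewrite big_seq1. Qed.

Definition tpS u v : ST := STmk (tp_spanb u v).

Lemma tpS_bil : bilinear_map tpS.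
Proof.
split=> [v|u] k a b; apply: val_inj => /=; rewrite /tpS /=.
  by rewrite tpDl tpZl.
by rewrite tpDr tpZr.
Qed.

Lemma span_all z : spanned z.
Proof.
case: Ht => Hb /(_ X tp Hb) [h0 [_ _ Hu]].
case: (proj2 Ht ST tpS tpS_bil) => h [Hh Htp _].
have Hv : linear (fun z => stval (h z)).
  by move=> k a b /=; rewrite Hh.
have E := Hu (fun z => stval (h z)) Hv (fun u v => congr1 stval (Htp u v)).
have E' := Hu id (fun k a b => erefl) (fun u v => erefl).
apply/spanbE; rewrite /= in E E'; rewrite (E' z) -(E z); case: (h z) => w Hw //.
Qed.

End Tens.

End MC.
Import MC.

Module MD.

Section TTb.
Variables (F : fieldType) (T TT : algType F) (tp : T -> T -> TT) (R : {pred T})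
  (sg dl : T -> T) (x : T).
Hypotheses (Hta : is_tensor_algebra tp) (HR : subalg_closed R)
  (Hsg : alg_automorphism_on R sg) (Hdl : sigma_derivation_on R sg dl)
  (Hsk : is_skew_poly R sg dl x).

Let Ht : is_tensor tp. Proof. by case: Hta. Qed.
Let tpDl := tpDl Ht. Let tpDr := tpDr Ht. Let tpZl := tpZl Ht. Let tpZr := tpZr Ht.
Let tp_linl := tp_linl Ht. Let tp_linr := tp_linr Ht.
Lemma tpM a b c d : tp a b * tp c d = tp (a * c) (b * d). Proof. by case: Hta. Qed.
Lemma tp11 : tp 1 1 = 1. Proof. by case: Hta. Qed.
Let R0 := R0 HR. Let R1 := R1 HR. Let RD := RD HR. Let RZ := RZ HR.
Let RN := RN HR. Let RB := RB HR. Let RM := RM HR.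
Local Notation pi := (pi HR Hsk).
Local Notation dle := (dle HR Hsk).
Let pi_lin := pi_lin HR Hsk.
Let piR := piR HR Hsk.

Definition tpb (b : bool) (u v : T) : TT := if b then tp u v else tp v u.

Lemma tpbM b u v u' v' : tpb b u v * tpb b u' v' = tpb b (u * u') (v * v').
Proof. by case: b; rewrite /tpb tpM. Qed.
Lemma tpbN b u v : tpb (~~ b) v u = tpb b u v.
Proof. by case: b. Qed.
Lemma tpb_linr b u : linear (tpb b u).
Proof. by case: b; [exact: tp_linr | exact: tp_linl]. Qed.
Lemma tpb_linl b v : linear (tpb b ^~ v).
Proof. by case: b; [exact: tp_linl | exact: tp_linr]. Qed.
Lemma tpb11 b : tpb b 1 1 = 1. Proof. by case: b; rewrite /tpb tp11. Qed.
Lemma tpb0r b u : tpb b u 0 = 0. Proof. exact: lin0 (tpb_linr b u). Qed.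
Lemma tpb_sumr b (I : Type) (s : seq I) (P : pred I) (G : I -> T) u :
  tpb b u (\sum_(i <- s | P i) G i) = \sum_(i <- s | P i) tpb b u (G i).
Proof. have := lin_sum (tpb_linr b u) s P G. exact. Qed.
Lemma tpb_suml b (I : Type) (s : seq I) (P : pred I) (G : I -> T) v :
  tpb b (\sum_(i <- s | P i) G i) v = \sum_(i <- s | P i) tpb b (G i) v.
Proof. have := lin_sum (tpb_linl b v) s P G. exact. Qed.

Definition actf b (g : T -> T) u v := if b then tp u (g v) else tp (g u) v.
Lemma actf_bil b g : linear g -> bilinear_map (actf b g).
Proof.
move=> Hg; rewrite /actf; case: b; split=> [v|u] k a a' /=.
- by rewrite tpDl ?tpZl.
- by rewrite linD // linZ // tpDr ?tpZr.
- by rewrite linD // linZ // tpDl ?tpZl.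
- by rewrite tpDr ?tpZr.
Qed.
Definition act b g (Hg : linear g) : TT -> TT := lift Ht (actf_bil b Hg).
Lemma act_lin b g (Hg : linear g) : linear (act b Hg).
Proof. exact: lift_lin. Qed.
Lemma act_tpb b g (Hg : linear g) u v : act b Hg (tpb b u v) = tpb b u (g v).
Proof. by rewrite /act; case: b; rewrite /tpb lift_tp. Qed.
Lemma act_sum b g (Hg : linear g) (I : Type) (s : seq I) (f h : I -> T) :
  act b Hg (\sum_(p <- s) tpb b (f p) (h p)) = \sum_(p <- s) tpb b (f p) (g (h p)).
Proof. by rewrite (lin_sum (act_lin b Hg)); apply: eq_bigr => p _; rewrite act_tpb. Qed.
Lemma act0 b g (Hg : linear g) : act b Hg 0 = 0.
Proof. exact: lin0 (act_lin b Hg). Qed.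

Lemma rep b z : exists s : seq (T * T), z = \sum_(p <- s) tpb b p.1 p.2.
Proof.
case: (span_all Ht z) => s ->; case: b.
  by exists s.
exists [seq (p.2, p.1) | p <- s]; rewrite big_map; by apply: eq_bigr.
Qed.

Definition K b m := act b (pi_lin m).
Lemma K_lin b m : linear (K b m). Proof. exact: act_lin. Qed.
Lemma K_tpb b m u v : K b m (tpb b u v) = tpb b u (pi m v). Proof. exact: act_tpb. Qed.
Lemma K_sum b m (I : Type) (s : seq I) (f h : I -> T) :
  K b m (\sum_(p <- s) tpb b (f p) (h p)) = \sum_(p <- s) tpb b (f p) (pi m (h p)).
Proof. exact: act_sum. Qed.

Definition sdg (s : seq (T * T)) := \sum_(p <- s) dg HR Hsk p.2.
Lemma sdg_ge s p : p \in s -> (dg HR Hsk p.2 <= sdg s)%N.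
Proof.
rewrite /sdg; elim: s => // q s IH; rewrite inE big_cons => /orP [/eqP -> | /IH H].
  exact: leq_addr.
exact: leq_trans H (leq_addl _ _).
Qed.

Lemma tpb_expand b u v n : (dg HR Hsk v <= n)%N ->
  tpb b u v = \sum_(i < n) tpb b u (pi i v) * tpb b 1 (x ^+ i).
Proof.
move=> Hn; rewrite {1}(@pi_expand _ _ _ _ _ _ HR Hsk v n); last first.
  by move=> i Hi; apply: pi_ge_dg; exact: leq_trans Hn Hi.
by rewrite tpb_sumr; apply: eq_bigr => i _; rewrite tpbM mulr1.
Qed.

Lemma K_ge b z : exists n, forall m, (n <= m)%N -> K b m z = 0.
Proof.
case: (rep b z) => s ->; exists (sdg s) => m Hm.
rewrite K_sum big_seq big1 // => p Hp.
by rewrite pi_ge_dg ?tpb0r //; exact: leq_trans (sdg_ge Hp) Hm.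
Qed.

Lemma recon b z n : (forall m, (n <= m)%N -> K b m z = 0) ->
  z = \sum_(i < n) K b i z * tpb b 1 (x ^+ i).
Proof.
move=> H; case: (rep b z) => s Ez.
set N := maxn n (sdg s).
have E1 : z = \sum_(i < N) K b i z * tpb b 1 (x ^+ i).
  transitivity (\sum_(p <- s) \sum_(i < N) tpb b p.1 (pi i p.2) * tpb b 1 (x ^+ i)).
    rewrite {1}Ez big_seq [RHS]big_seq; apply: eq_bigr => p Hp.
    apply: tpb_expand; exact: leq_trans (sdg_ge Hp) (leq_maxr _ _).
  rewrite exchange_big; apply: eq_bigr => i _; by rewrite Ez K_sum mulr_suml.
rewrite {1}E1; apply: (@sum_shrink _ (fun i => K b i z * tpb b 1 (x ^+ i)) n N); first exact: leq_maxl.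
by move=> i Hi; rewrite H ?mul0r.
Qed.

Definition degle b z a := forall m, (a < m)%N -> K b m z = 0.

Lemma degle_mono b z a c : degle b z a -> (a <= c)%N -> degle b z c.
Proof. by move=> H Hac m Hm; apply: H; exact: leq_ltn_trans Hac Hm. Qed.
Lemma degle_add b z z' a : degle b z a -> degle b z' a -> degle b (z + z') a.
Proof. by move=> H H' m Hm; rewrite (linD (K_lin b m)) H // H' // addr0. Qed.
Lemma degle_opp b z a : degle b z a -> degle b (- z) a.
Proof. by move=> H m Hm; rewrite (linN (K_lin b m)) H // oppr0. Qed.
Lemma degle_sum b (I : Type) (s : seq I) (P : pred I) (G : I -> TT) a :
  (forall i, P i -> degle b (G i) a) -> degle b (\sum_(i <- s | P i) G i) a.
Proof. by move=> H m Hm; rewrite (lin_sum (K_lin b m)) big1 // => i Pi; apply: H. Qed.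
Lemma degle0 b a : degle b 0 a.
Proof. by move=> m _; rewrite (lin0 (K_lin b m)). Qed.

Lemma deg_rep b z a : degle b z a -> exists s : seq (T * T),
  (forall p, p \in s -> dle p.2 a) /\ z = \sum_(p <- s) tpb b p.1 p.2.
Proof.
move=> H; have Ez := recon (n := a.+1) H.
case: (rep b z) => s0 E0.
exists [seq (p.1, pi i p.2 * x ^+ i) | i <- iota 0 a.+1, p <- s0]; split.
  move=> p /allpairsP [[i q] [Hi Hq ->]].
  have Hi' : (i < a.+1)%N by move: Hi; rewrite mem_iota.
  move=> /= j Hj; rewrite (pi_mono HR Hsk j i (piR _ _)) ifF //.
  apply/negbTE; rewrite neq_ltn; apply/orP; right.
  exact: leq_trans Hi' Hj.
rewrite big_allpairs_dep /= {1}Ez -(big_mkord xpredT (fun i => K b i z * tpb b 1 (x ^+ i))).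
rewrite /index_iota subn0; apply: eq_bigr => i _.
by rewrite {1}E0 K_sum mulr_suml; apply: eq_bigr => p _; rewrite tpbM mulr1.
Qed.

Definition phi (t : T) := sg (pi 0 t).
Lemma psi_ex t : exists a, a \in R /\ sg a = pi 0 t.
Proof. case: Hsg => _ _ H _ _; case: (H (pi 0 t) (piR _ _)) => a Ha E; by exists a. Qed.
Definition psi (t : T) := proj1_sig (cid (psi_ex t)).
Lemma psiR t : psi t \in R. Proof. by rewrite /psi; case: cid => a [] . Qed.
Lemma psiE t : sg (psi t) = pi 0 t. Proof. by rewrite /psi; case: cid => a []. Qed.
Lemma sg_lin k a c : a \in R -> c \in R -> sg (k *: a + c) = k *: sg a + sg c.
Proof. by case: Hsg => _ _ _ H _; apply: H. Qed.
Lemma sg_inj a c : a \in R -> c \in R -> sg a = sg c -> a = c.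
Proof. by case: Hsg => _ H _ _ _; apply: H. Qed.
Lemma phi_lin : linear phi.
Proof. by move=> k a c; rewrite /phi (pi_lin 0) sg_lin ?piR. Qed.
Lemma psi_lin : linear psi.
Proof.
move=> k a c; apply: sg_inj; rewrite ?RD ?RZ ?psiR //.
by rewrite sg_lin ?psiR // !psiE (pi_lin 0).
Qed.
Lemma iter_lin (g : T -> T) n : linear g -> linear (iter n g).
Proof. by move=> Hg; elim: n => [|n IH] k a c //=; rewrite IH Hg. Qed.
Lemma phiR t : t \in R -> phi t \in R.
Proof. by move=> _; rewrite /phi sgR ?piR. Qed.
Lemma iter_phiR n t : t \in R -> iter n phi t \in R.
Proof. by move=> Ht'; elim: n => //= n IH; rewrite phiR. Qed.
Lemma iter_psiR n t : t \in R -> iter n psi t \in R.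
Proof. by move=> Ht'; case: n => //= n; rewrite psiR. Qed.
Lemma iter_phi_sg n r : r \in R -> iter n phi r = iter n sg r.
Proof.
move=> Hr; elim: n => //= n IH.
by rewrite IH /phi (pi_inR HR Hsk 0 (iter_sgR Hsg n Hr)).
Qed.
Lemma psi_phi r : r \in R -> psi (phi r) = r.
Proof.
move=> Hr; apply: sg_inj; rewrite ?psiR //.
by rewrite psiE /phi (pi_inR HR Hsk 0 (sgR Hsg (piR 0 r))) /= (pi_inR HR Hsk 0 Hr).
Qed.
Lemma phi_psi r : r \in R -> phi (psi r) = r.
Proof.
move=> Hr; rewrite /phi (pi_inR HR Hsk 0 (psiR r)) /= psiE (pi_inR HR Hsk 0 Hr) //.
Qed.
Lemma iter_psi_phi n r : r \in R -> iter n psi (iter n phi r) = r.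
Proof.
elim: n r => [|n IH] r Hr //.
by rewrite iterSr iterS psi_phi ?iter_phiR // IH.
Qed.
Lemma iter_phi_psi n r : r \in R -> iter n phi (iter n psi r) = r.
Proof.
elim: n r => [|n IH] r Hr //.
by rewrite iterSr iterS phi_psi ?iter_psiR // IH.
Qed.

Definition Tw b a := act b (iter_lin a phi_lin).
Definition Twi b a := act b (iter_lin a psi_lin).
Lemma Tw_lin b a : linear (Tw b a). Proof. exact: act_lin. Qed.
Lemma Twi_lin b a : linear (Twi b a). Proof. exact: act_lin. Qed.

Definition KIs b w := exists s : seq (T * T),
  (forall p, p \in s -> p.2 \in R) /\ w = \sum_(p <- s) tpb b p.1 p.2.
Definition RRs b w := exists s : seq (T * T),
  (forall p, p \in s -> (p.1 \in R) && (p.2 \in R)) /\ w = \sum_(p <- s) tpb b p.1 p.2.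

Lemma KIs_degle b w : KIs b w -> degle b w 0.
Proof.
case=> s [Hs ->] m Hm; rewrite K_sum big_seq big1 // => p Hp.
by rewrite (pi_inR HR Hsk m (Hs p Hp)); case: m Hm => // m _; rewrite tpb0r.
Qed.

Lemma degle_KIs b w : degle b w 0 -> KIs b w.
Proof.
move=> /deg_rep [s [Hs ->]]; exists s; split => // p /Hs H.
by rewrite (pi_expand_dle H) big_ord1 expr0 mulr1 piR.
Qed.

Lemma K_KIs b m z : KIs b (K b m z).
Proof.
case: (rep b z) => s ->; rewrite K_sum.
exists [seq (p.1, pi m p.2) | p <- s]; rewrite big_map; split => //.
by move=> p /mapP [q _ ->]; rewrite piR.
Qed.

Lemma Tw_KIs b a w : KIs b w -> KIs b (Tw b a w).
Proof.
case=> s [Hs ->]; rewrite /Tw act_sum.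
exists [seq (p.1, iter a phi p.2) | p <- s]; rewrite big_map; split => //.
by move=> p /mapP [q Hq ->]; rewrite iter_phiR ?Hs.
Qed.
Lemma Twi_KIs b a w : KIs b w -> KIs b (Twi b a w).
Proof.
case=> s [Hs ->]; rewrite /Twi act_sum.
exists [seq (p.1, iter a psi p.2) | p <- s]; rewrite big_map; split => //.
by move=> p /mapP [q Hq ->]; rewrite iter_psiR ?Hs.
Qed.
Lemma Twi_Tw b a w : KIs b w -> Twi b a (Tw b a w) = w.
Proof.
case=> s [Hs ->]; rewrite /Tw /Twi !act_sum; rewrite !big_seq; apply: eq_bigr => p Hp.
by rewrite iter_psi_phi ?Hs.
Qed.
Lemma Tw_Twi b a w : KIs b w -> Tw b a (Twi b a w) = w.
Proof.
case=> s [Hs ->]; rewrite /Tw /Twi !act_sum; rewrite !big_seq; apply: eq_bigr => p Hp.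
by rewrite iter_phi_psi ?Hs.
Qed.
Lemma Tw_nz b a w : KIs b w -> w != 0 -> Tw b a w != 0.
Proof.
move=> Hw; apply: contraNneq => E; by rewrite -(Twi_Tw a Hw) E (lin0 (Twi_lin b a)).
Qed.
Lemma Tw0 b w : KIs b w -> Tw b 0 w = w.
Proof.
case=> s [Hs ->]; rewrite /Tw act_sum; by [].
Qed.

Lemma K_tpb_other b m u v : K (~~ b) m (tpb b u v) = tpb b (pi m u) v.
Proof. by rewrite -tpbN K_tpb tpbN. Qed.
Lemma act_other b g (Hg : linear g) u v : act (~~ b) Hg (tpb b u v) = tpb b (g u) v.
Proof. by rewrite -tpbN act_tpb tpbN. Qed.

Lemma RRs_KIs b w : RRs b w -> KIs b w /\ KIs (~~ b) w.
Proof.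
case=> s [Hs ->]; split.
  by exists s; split => // p /Hs /andP [].
exists [seq (p.2, p.1) | p <- s]; rewrite big_map; split.
  by move=> p /mapP [q /Hs /andP [H1 H2] ->].
by apply: eq_bigr => p _; rewrite tpbN.
Qed.

Lemma RRs_in b w : RRs b w -> in_tensor tp R w.
Proof.
case=> s [Hs ->]; case: b.
  exists s; split => //; apply/allP => p /Hs //.
exists [seq (p.2, p.1) | p <- s]; rewrite big_map; split => //.
by apply/allP => p /mapP [q /Hs /andP [H1 H2] ->] /=; rewrite H1 H2.
Qed.

Lemma K_other_RRs b m w : KIs b w -> RRs b (K (~~ b) m w).
Proof.
case=> s [Hs ->]; rewrite (lin_sum (K_lin _ m)).
exists [seq (pi m p.1, p.2) | p <- s]; rewrite big_map; split.
  by move=> p /mapP [q /Hs H ->] /=; rewrite piR H.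
by apply: eq_bigr => p _; rewrite K_tpb_other.
Qed.

Lemma Tw_other_RRs b a w : RRs b w -> RRs b (Tw (~~ b) a w).
Proof.
case=> s [Hs ->]; rewrite (lin_sum (Tw_lin _ a)).
exists [seq (iter a phi p.1, p.2) | p <- s]; rewrite big_map; split.
  by move=> p /mapP [q /Hs /andP [H1 H2] ->] /=; rewrite iter_phiR.
by apply: eq_bigr => p _; rewrite /Tw act_other.
Qed.

Lemma KIs_add b w w' : KIs b w -> KIs b w' -> KIs b (w + w').
Proof.
case=> s [Hs ->] [s' [Hs' ->]]; exists (s ++ s'); rewrite big_cat; split => //.
by move=> p; rewrite mem_cat => /orP [/Hs|/Hs'].
Qed.
Lemma KIs0 b : KIs b 0.
Proof. by exists [::]; rewrite big_nil. Qed.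
Lemma KIs_sum b (I : Type) (s : seq I) (G : I -> TT) :
  (forall i, KIs b (G i)) -> KIs b (\sum_(i <- s) G i).
Proof.
move=> H; elim: s => [|i s IH]; first by rewrite big_nil; apply: KIs0.
by rewrite big_cons; apply: KIs_add.
Qed.
Lemma KIs_tpb b u r : r \in R -> KIs b (tpb b u r).
Proof. by move=> Hr; exists [:: (u, r)]; rewrite big_seq1; split => // p; rewrite inE => /eqP ->. Qed.

Lemma mulK b p q a c : degle b p a -> degle b q c ->
  degle b (p * q) (a + c) /\ K b (a + c) (p * q) = K b a p * Tw b a (K b c q).
Proof.
move=> /deg_rep [s [Hs ->]] /deg_rep [s' [Hs' ->]].
have E : (\sum_(u <- s) tpb b u.1 u.2) * (\sum_(v <- s') tpb b v.1 v.2) =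
   \sum_(u <- s) \sum_(v <- s') tpb b (u.1 * v.1) (u.2 * v.2).
  rewrite mulr_suml; apply: eq_bigr => u _; rewrite mulr_sumr.
  by apply: eq_bigr => v _; rewrite tpbM.
rewrite E; split.
  rewrite big_seq; apply: degle_sum => u Hu; rewrite big_seq; apply: degle_sum => v Hv m Hm.
  by rewrite K_tpb ((mul_lemma Hsg Hdl (Hs u Hu) (Hs' v Hv)).1 m Hm) tpb0r.
rewrite (lin_sum (K_lin b _)) !K_sum /Tw act_sum mulr_suml.
apply: eq_big_seq => u Hu; rewrite K_sum mulr_sumr.
apply: eq_big_seq => v Hv; rewrite tpbM (mul_lemma Hsg Hdl (Hs u Hu) (Hs' v Hv)).2.
by rewrite iter_phi_sg ?piR.
Qed.

Lemma K0_KIs b w : KIs b w -> K b 0 w = w.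
Proof.
move=> /KIs_degle H; by rewrite [RHS](@recon b w 1) ?big_ord1 ?expr0 ?tpb11 ?mulr1.
Qed.

Lemma lead_exists b z : z != 0 -> exists a, degle b z a /\ K b a z != 0.
Proof.
move=> Hz; case: (K_ge b z) => n Hn.
have exP : exists m, K b m z != 0.
  case: (excluded_middle_informative (exists m, K b m z != 0)) => // H.
  have H' : forall m, K b m z = 0.
    by move=> m; apply/eqP; apply: contraT => Hm; case: H; exists m.
  by move: Hz; rewrite (@recon b z 0) ?big_ord0 ?eqxx.
have ubP : forall m, K b m z != 0 -> (m <= n)%N.
  move=> m; apply: contraR; rewrite -ltnNge => /ltnW /Hn ->; by rewrite eqxx.
case: (ex_maxnP exP ubP) => a Ha Hmax; exists a; split => // m Hm.
apply/eqP; apply: contraT => Hm'; have := Hmax m Hm'; by rewrite leqNgt Hm.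
Qed.

Lemma KIs_dom (Hdom : tensor_domain tp R) b p q : KIs b p -> KIs b q ->
  p != 0 -> q != 0 -> p * q != 0.
Proof.
move=> Hp Hq Hp0 Hq0.
case: (lead_exists (~~ b) Hp0) => a [Hpa Hpn].
case: (lead_exists (~~ b) Hq0) => c [Hqc Hqn].
have [_ E] := mulK Hpa Hqc.
apply: contraNneq _ (_ : K (~~ b) (a + c) (p * q) != 0).
  by move=> ->; rewrite (lin0 (K_lin _ _)).
rewrite E; apply/eqP => /(Hdom _ _ (RRs_in (K_other_RRs a Hp))).
move=> /(_ (RRs_in (Tw_other_RRs a (K_other_RRs c Hq)))) [] /eqP.
  by rewrite (negbTE Hpn).
by rewrite (negbTE (Tw_nz a (K_KIs _ _ _) Hqn)).
Qed.

Lemma pow_lead (Hdom : tensor_domain tp R) b z N : degle b z N -> K b N z != 0 ->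
  forall j, degle b (z ^+ j) (j * N) /\ K b (j * N) (z ^+ j) != 0.
Proof.
move=> HzN Hz0; elim=> [|j [IH1 IH2]].
  have E1 : (1 : TT) = tpb b 1 1 by rewrite tpb11.
  rewrite expr0 mul0n E1; split.
    by move=> m Hm; rewrite K_tpb (pi_inR HR Hsk m R1); case: m Hm => // m _; rewrite tpb0r.
  by rewrite K_tpb (pi_inR HR Hsk 0 R1) /= tpb11 oner_neq0.
have [H1 H2] := mulK IH1 HzN.
rewrite exprSr mulSn addnC; split => //.
rewrite H2; apply: KIs_dom => //; first exact: K_KIs.
  by apply: Tw_KIs; exact: K_KIs.
by apply: Tw_nz => //; exact: K_KIs.
Qed.

End TTb.

End MD.
Import MD.

Module ME.

Section Hopf.
Variables (F : fieldType) (T TT : algType F) (tp : T -> T -> TT)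
    (TTT : lmodType F) (tpL : TT -> T -> TTT) (tpR : T -> TT -> TTT)
    (D : T -> TT) (eps : T -> F) (S : T -> T).
Hypotheses (Hta : is_tensor_algebra tp) (H3 : is_triple_tensor tp tpL tpR)
  (Hh : hopf_algebra tp tpL tpR D eps S).

Let Ht : is_tensor tp. Proof. by case: Hta. Qed.
Let HtL : is_tensor tpL. Proof. by case: H3. Qed.
Let HtR : is_tensor tpR. Proof. by case: H3. Qed.
Let HLR a b c : tpL (tp a b) c = tpR a (tp b c). Proof. by case: H3. Qed.
Let tpDl := tpDl Ht. Let tpDr := tpDr Ht. Let tpZl := tpZl Ht. Let tpZr := tpZr Ht.
Let tpM := tpM Hta. Let tp11 := tp11 Hta.
Let Dlin : linear D. Proof. by case: Hh => [[]]. Qed.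
Let D1 : D 1 = 1. Proof. by case: Hh => [[_ []]]. Qed.
Let DM a b : D (a * b) = D a * D b. Proof. by case: Hh => [[_ [_ H]]]. Qed.
Let Slin : linear S. Proof. by case: Hh => _ _ _ _ []. Qed.
Let coass : forall h1 h2 : TT -> TTT, linear h1 -> linear h2 ->
        (forall a b, h1 (tp a b) = tpL (D a) b) ->
        (forall a b, h2 (tp a b) = tpR a (D b)) ->
        forall t, h1 (D t) = h2 (D t).
Proof. by case: Hh. Qed.
Let counit : forall h1 h2 : TT -> T, linear h1 -> linear h2 ->
        (forall a b, h1 (tp a b) = eps a *: b) ->
        (forall a b, h2 (tp a b) = eps b *: a) ->
        forall t, h1 (D t) = t /\ h2 (D t) = t.
Proof. by case: Hh. Qed.
Let antip : forall h1 h2 : TT -> T, linear h1 -> linear h2 ->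
        (forall a b, h1 (tp a b) = S a * b) ->
        (forall a b, h2 (tp a b) = a * S b) ->
        forall t, h1 (D t) = eps t *: 1 /\ h2 (D t) = eps t *: 1.
Proof. by case: Hh => _ _ _ _ [_ _]. Qed.
Let epslin : forall k a b, eps (k *: a + b) = k * eps a + eps b.
Proof. by case: Hh => _ []. Qed.

Lemma mk_bil (U V : lmodType F) (Y : lmodType F) (f : U -> V -> Y) :
  (forall v, linear (f^~ v)) -> (forall u, linear (f u)) -> bilinear_map f.
Proof. by move=> H1 H2; split. Qed.

Lemma lin_comp (U V W : lmodType F) (f : V -> W) (g : U -> V) :
  linear f -> linear g -> linear (fun u => f (g u)).
Proof. by move=> Hf Hg k a b /=; rewrite Hg Hf. Qed.

Lemma mu_bil : bilinear_map (fun a b : T => a * b).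
Proof.
apply: mk_bil => [v|u] k a b /=; first by rewrite mulrDl scalerAl.
by rewrite mulrDr scalerAr.
Qed.
Definition mu := lift Ht mu_bil.
Let mu_lin : linear mu. Proof. exact: lift_lin. Qed.
Let mu_tp a b : mu (tp a b) = a * b. Proof. exact: lift_tp. Qed.

Lemma Sl_bil : bilinear_map (fun a b => tp (S a) b).
Proof.
apply: mk_bil => [v|u] k a b /=; first by rewrite Slin tpDl tpZl.
by rewrite tpDr tpZr.
Qed.
Definition Sl := lift Ht Sl_bil.
Let Sl_lin : linear Sl. Proof. exact: lift_lin. Qed.
Let Sl_tp a b : Sl (tp a b) = tp (S a) b. Proof. exact: lift_tp. Qed.
Lemma Sr_bil : bilinear_map (fun a b => tp a (S b)).
Proof.
apply: mk_bil => [v|u] k a b /=; first by rewrite tpDl tpZl.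
by rewrite Slin tpDr tpZr.
Qed.
Definition Sr := lift Ht Sr_bil.
Let Sr_lin : linear Sr. Proof. exact: lift_lin. Qed.
Let Sr_tp a b : Sr (tp a b) = tp a (S b). Proof. exact: lift_tp. Qed.

Lemma h1_bil : bilinear_map (fun a b => tpL (D a) b).
Proof.
apply: mk_bil => [v|u] k a b /=; first by rewrite Dlin (MC.tpDl HtL) (MC.tpZl HtL).
by rewrite (MC.tpDr HtL) (MC.tpZr HtL).
Qed.
Lemma h2_bil : bilinear_map (fun a b => tpR a (D b)).
Proof.
apply: mk_bil => [v|u] k a b /=; first by rewrite (MC.tpDl HtR) (MC.tpZl HtR).
by rewrite Dlin (MC.tpDr HtR) (MC.tpZr HtR).
Qed.
Definition h1 := lift Ht h1_bil.
Definition h2 := lift Ht h2_bil.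
Lemma coassE t : h1 (D t) = h2 (D t).
Proof. by apply: coass; rewrite /h1 /h2; [exact: lift_lin|exact: lift_lin|exact: lift_tp|exact: lift_tp]. Qed.

Lemma thL_bil (f : TT -> T -> TT) : bilinear_map f -> bilinear_map f. Proof. by []. Qed.

Lemma ext3 (g : TTT -> TT) (k1 : TT -> TT) : linear g -> linear k1 ->
  (forall a b, g (h1 (tp a b)) = k1 (tp a b)) -> forall w, g (h1 w) = k1 w.
Proof.
move=> Hg Hk E; apply: (tens_ext Ht) => //; first apply: lin_comp => //; exact: lift_lin.
Qed.
Lemma ext3' (g : TTT -> TT) (k1 : TT -> TT) : linear g -> linear k1 ->
  (forall a b, g (h2 (tp a b)) = k1 (tp a b)) -> forall w, g (h2 w) = k1 w.
Proof.
move=> Hg Hk E; apply: (tens_ext Ht) => //; first apply: lin_comp => //; exact: lift_lin.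
Qed.

Lemma G2_bil : bilinear_map (fun u v => tp u 1 * D v).
Proof.
apply: mk_bil => [v|u] k a b /=; first by rewrite tpDl tpZl mulrDl scalerAl.
by rewrite Dlin mulrDr scalerAr.
Qed.
Definition G2 := lift Ht G2_bil.
Lemma G2_lin : linear G2. Proof. exact: lift_lin. Qed.
Lemma G2_tp u v : G2 (tp u v) = tp u 1 * D v. Proof. exact: lift_tp. Qed.

Lemma P2_bil : bilinear_map (fun u v => tp (mu (D u)) v).
Proof.
apply: mk_bil => [v|u] k a b /=; first by rewrite Dlin mu_lin tpDl tpZl.
by rewrite tpDr tpZr.
Qed.
Definition P2 := lift Ht P2_bil.
Lemma P2_lin : linear P2. Proof. exact: lift_lin. Qed.
Lemma P2_tp u v : P2 (tp u v) = tp (mu (D u)) v. Proof. exact: lift_tp. Qed.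

Lemma Th1_bil : bilinear_map (fun z c => tp (mu z) c).
Proof.
apply: mk_bil => [v|u] k a b /=; first by rewrite mu_lin tpDl tpZl.
by rewrite tpDr tpZr.
Qed.
Definition Th1 := lift HtL Th1_bil.
Lemma Th1_lin : linear Th1. Proof. exact: lift_lin. Qed.
Lemma Th1_tpR a w : Th1 (tpR a w) = tp a 1 * w.
Proof.
move: w; apply: (tens_ext Ht).
- apply: lin_comp; [exact: Th1_lin | exact: tp_linr].
- by move=> k p q; rewrite mulrDr scalerAr.
by move=> b c; rewrite -HLR /Th1 lift_tp mu_tp tpM mul1r.
Qed.

Lemma I1 t : G2 (D t) = P2 (D t).
Proof.
have E1 : forall w, Th1 (h1 w) = P2 w.
  apply: ext3; [exact: Th1_lin | exact: P2_lin|] => a b.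
  by rewrite /h1 lift_tp /Th1 lift_tp P2_tp.
have E2 : forall w, Th1 (h2 w) = G2 w.
  apply: ext3'; [exact: Th1_lin | exact: G2_lin|] => a b.
  by rewrite /h2 lift_tp Th1_tpR G2_tp.
by rewrite -E1 -E2 coassE.
Qed.

Lemma eh1_bil : bilinear_map (fun a b : T => eps a *: b).
Proof.
apply: mk_bil => [v|u] k a b /=; first by rewrite epslin scalerDl scalerA.
by rewrite scalerDr !scalerA mulrC.
Qed.
Definition eh1 := lift Ht eh1_bil.
Lemma eh2_bil : bilinear_map (fun a b : T => eps b *: a).
Proof.
apply: mk_bil => [v|u] k a b /=; first by rewrite scalerDr !scalerA mulrC.
by rewrite epslin scalerDl scalerA.
Qed.
Definition eh2 := lift Ht eh2_bil.
Lemma eh1D t : eh1 (D t) = t.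
Proof.
have := @counit eh1 eh2 (lift_lin _ _) (lift_lin _ _) (lift_tp _ _) (lift_tp _ _) t.
by case.
Qed.
Lemma eh2D t : eh2 (D t) = t.
Proof.
have := @counit eh1 eh2 (lift_lin _ _) (lift_lin _ _) (lift_tp _ _) (lift_tp _ _) t.
by case.
Qed.
Lemma muSlD t : mu (Sl (D t)) = eps t *: 1.
Proof.
have := @antip (fun w => mu (Sl w)) (fun w => mu (Sr w)) (lin_comp mu_lin Sl_lin)
  (lin_comp mu_lin Sr_lin) (fun a b => etrans (congr1 mu (Sl_tp a b)) (mu_tp _ _))
  (fun a b => etrans (congr1 mu (Sr_tp a b)) (mu_tp _ _)) t.
by case.
Qed.
Lemma muSrD t : mu (Sr (D t)) = eps t *: 1.
Proof.
have := @antip (fun w => mu (Sl w)) (fun w => mu (Sr w)) (lin_comp mu_lin Sl_lin)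
  (lin_comp mu_lin Sr_lin) (fun a b => etrans (congr1 mu (Sl_tp a b)) (mu_tp _ _))
  (fun a b => etrans (congr1 mu (Sr_tp a b)) (mu_tp _ _)) t.
by case.
Qed.

Lemma G2i_bil : bilinear_map (fun p q => tp p 1 * Sl (D q)).
Proof.
apply: mk_bil => [v|u] k a b /=; first by rewrite tpDl tpZl mulrDl scalerAl.
by rewrite Dlin Sl_lin mulrDr scalerAr.
Qed.
Definition G2i := lift Ht G2i_bil.
Lemma G2i_lin : linear G2i. Proof. exact: lift_lin. Qed.
Lemma G2i_tp u v : G2i (tp u v) = tp u 1 * Sl (D v). Proof. exact: lift_tp. Qed.

Lemma Th2_bil : bilinear_map (fun z c => tp (mu (Sr z)) c).
Proof.
apply: mk_bil => [v|u] k a b /=; first by rewrite Sr_lin mu_lin tpDl tpZl.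
by rewrite tpDr tpZr.
Qed.
Definition Th2 := lift HtL Th2_bil.
Lemma Th2_lin : linear Th2. Proof. exact: lift_lin. Qed.
Lemma Th2_tpR a w : Th2 (tpR a w) = tp a 1 * Sl w.
Proof.
move: w; apply: (tens_ext Ht).
- apply: lin_comp; [exact: Th2_lin | exact: tp_linr].
- by move=> k p q; rewrite Sl_lin mulrDr scalerAr.
by move=> b c; rewrite -HLR /Th2 lift_tp Sr_tp mu_tp Sl_tp tpM mul1r.
Qed.

Lemma I2 t : G2i (D t) = tp 1 t.
Proof.
have E1 : forall w, Th2 (h1 w) = tp 1 (eh1 w).
  apply: ext3; [exact: Th2_lin | |] => [k p q|a b].
    by rewrite /eh1 (lift_lin Ht eh1_bil) tpDr tpZr.
  by rewrite /h1 lift_tp /Th2 lift_tp muSrD /eh1 lift_tp tpZl tpZr.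
have E2 : forall w, Th2 (h2 w) = G2i w.
  apply: ext3'; [exact: Th2_lin | exact: G2i_lin|] => a b.
  by rewrite /h2 lift_tp Th2_tpR G2i_tp.
by rewrite -E2 -coassE E1 eh1D.
Qed.

Lemma G2i_mull u w : G2i (tp u 1 * w) = tp u 1 * G2i w.
Proof.
move: w; apply: (tens_ext Ht).
- by move=> k p q; rewrite mulrDr -scalerAr G2i_lin.
- by move=> k p q; rewrite G2i_lin mulrDr scalerAr.
by move=> a b; rewrite tpM mul1r !G2i_tp mulrA tpM mulr1.
Qed.

Lemma G2i_G2 w : G2i (G2 w) = w.
Proof.
move: w; apply: (tens_ext Ht) => //.
- apply: lin_comp; [exact: G2i_lin | exact: G2_lin].
by move=> a b; rewrite G2_tp G2i_mull I2 tpM mulr1 mul1r.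
Qed.

Lemma G2_mulr w y : G2 (w * tp 1 y) = G2 w * D y.
Proof.
move: w; apply: (tens_ext Ht).
- by move=> k p q; rewrite mulrDl -scalerAl G2_lin.
- by move=> k p q; rewrite G2_lin mulrDl scalerAl.
by move=> a b; rewrite tpM mulr1 !G2_tp DM mulrA.
Qed.

Lemma G1_bil : bilinear_map (fun u v => D u * tp 1 v).
Proof.
apply: mk_bil => [v|u] k a b /=; first by rewrite Dlin mulrDl scalerAl.
by rewrite tpDr tpZr mulrDr scalerAr.
Qed.
Definition G1 := lift Ht G1_bil.
Lemma G1_lin : linear G1. Proof. exact: lift_lin. Qed.
Lemma G1_tp u v : G1 (tp u v) = D u * tp 1 v. Proof. exact: lift_tp. Qed.

Lemma P1_bil : bilinear_map (fun u v => tp u (mu (D v))).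
Proof.
apply: mk_bil => [v|u] k a b /=; first by rewrite tpDl tpZl.
by rewrite Dlin mu_lin tpDr tpZr.
Qed.
Definition P1 := lift Ht P1_bil.
Lemma P1_lin : linear P1. Proof. exact: lift_lin. Qed.
Lemma P1_tp u v : P1 (tp u v) = tp u (mu (D v)). Proof. exact: lift_tp. Qed.

Lemma Th3_bil : bilinear_map (fun (z : TT) c => z * tp 1 c).
Proof.
apply: mk_bil => [v|u] k a b /=; first by rewrite mulrDl scalerAl.
by rewrite tpDr tpZr mulrDr scalerAr.
Qed.
Definition Th3 := lift HtL Th3_bil.
Lemma Th3_lin : linear Th3. Proof. exact: lift_lin. Qed.
Lemma Th3_tpR a w : Th3 (tpR a w) = tp a (mu w).
Proof.
move: w; apply: (tens_ext Ht).
- apply: lin_comp; [exact: Th3_lin | exact: tp_linr].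
- apply: lin_comp; [exact: tp_linr | exact: mu_lin].
by move=> b c; rewrite -HLR /Th3 lift_tp mu_tp tpM mulr1.
Qed.

Lemma I3 t : G1 (D t) = P1 (D t).
Proof.
have E1 : forall w, Th3 (h1 w) = G1 w.
  apply: ext3; [exact: Th3_lin | exact: G1_lin|] => a b.
  by rewrite /h1 lift_tp /Th3 lift_tp G1_tp.
have E2 : forall w, Th3 (h2 w) = P1 w.
  apply: ext3'; [exact: Th3_lin | exact: P1_lin|] => a b.
  by rewrite /h2 lift_tp Th3_tpR P1_tp.
by rewrite -E1 -E2 coassE.
Qed.

Lemma G1i_bil : bilinear_map (fun p q => Sr (D p) * tp 1 q).
Proof.
apply: mk_bil => [v|u] k a b /=; first by rewrite Dlin Sr_lin mulrDl scalerAl.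
by rewrite tpDr tpZr mulrDr scalerAr.
Qed.
Definition G1i := lift Ht G1i_bil.
Lemma G1i_lin : linear G1i. Proof. exact: lift_lin. Qed.
Lemma G1i_tp u v : G1i (tp u v) = Sr (D u) * tp 1 v. Proof. exact: lift_tp. Qed.

Lemma Th4_bil : bilinear_map (fun (z : TT) c => Sr z * tp 1 c).
Proof.
apply: mk_bil => [v|u] k a b /=; first by rewrite Sr_lin mulrDl scalerAl.
by rewrite tpDr tpZr mulrDr scalerAr.
Qed.
Definition Th4 := lift HtL Th4_bil.
Lemma Th4_lin : linear Th4. Proof. exact: lift_lin. Qed.
Lemma Th4_tpR a w : Th4 (tpR a w) = tp a (mu (Sl w)).
Proof.
move: w; apply: (tens_ext Ht).
- apply: lin_comp; [exact: Th4_lin | exact: tp_linr].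
- apply: lin_comp; [exact: tp_linr | apply: lin_comp; [exact: mu_lin | exact: Sl_lin]].
by move=> b c; rewrite -HLR /Th4 lift_tp Sr_tp tpM mulr1 Sl_tp mu_tp.
Qed.

Lemma I4 t : G1i (D t) = tp t 1.
Proof.
have E1 : forall w, Th4 (h1 w) = G1i w.
  apply: ext3; [exact: Th4_lin | exact: G1i_lin|] => a b.
  by rewrite /h1 lift_tp /Th4 lift_tp G1i_tp.
have E2 : forall w, Th4 (h2 w) = tp (eh2 w) 1.
  apply: ext3'; [exact: Th4_lin | |] => [k p q|a b].
    by rewrite /eh2 (lift_lin Ht eh2_bil) tpDl tpZl.
  by rewrite /h2 lift_tp Th4_tpR muSlD /eh2 lift_tp tpZl tpZr.
by rewrite -E1 coassE E2 eh2D.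
Qed.

Lemma G1i_mulr w q : G1i (w * tp 1 q) = G1i w * tp 1 q.
Proof.
move: w; apply: (tens_ext Ht).
- by move=> k p p'; rewrite mulrDl -scalerAl G1i_lin.
- by move=> k p p'; rewrite G1i_lin mulrDl scalerAl.
by move=> a b; rewrite tpM mulr1 !G1i_tp -mulrA tpM mulr1.
Qed.

Lemma G1i_G1 w : G1i (G1 w) = w.
Proof.
move: w; apply: (tens_ext Ht) => //.
- apply: lin_comp; [exact: G1i_lin | exact: G1_lin].
by move=> a b; rewrite G1_tp G1i_mulr I4 tpM mulr1 mul1r.
Qed.

Lemma G1_mull y w : G1 (tp y 1 * w) = D y * G1 w.
Proof.
move: w; apply: (tens_ext Ht).
- by move=> k p q; rewrite mulrDr -scalerAr G1_lin.
- by move=> k p q; rewrite G1_lin mulrDr scalerAr.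
by move=> a b; rewrite tpM mul1r !G1_tp DM mulrA.
Qed.

Lemma DX y n : D (y ^+ n) = D y ^+ n.
Proof. by elim: n => [|n IH]; rewrite ?expr0 ?D1 // !exprS DM IH. Qed.

End Hopf.

End ME.
Import ME.

Module MF.

Section Main.
Variables (F : fieldType) (T TT : algType F) (tp : T -> T -> TT)
    (TTT : lmodType F) (tpL : TT -> T -> TTT) (tpR : T -> TT -> TTT)
    (D : T -> TT) (eps : T -> F) (S : T -> T)
    (R : {pred T}) (sg dl : T -> T) (x : T).
Hypotheses (Hta : is_tensor_algebra tp) (H3 : is_triple_tensor tp tpL tpR)
  (Hh : hopf_algebra tp tpL tpR D eps S) (Hsub : hopf_subalgebra tp D S R)
  (Hsg : alg_automorphism_on R sg) (Hdl : sigma_derivation_on R sg dl)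
  (Hsk : is_skew_poly R sg dl x) (Hdom : tensor_domain tp R).

Let HR : subalg_closed R. Proof. by case: Hsub. Qed.
Let DR r : r \in R -> in_tensor tp R (D r). Proof. by case: Hsub => _ H _ _; apply: H. Qed.
Let Ht : is_tensor tp. Proof. by case: Hta. Qed.
Let R1 := R1 HR.
Let tpM := tpM Hta.
Let Dlin : linear D. Proof. by case: Hh => [[]]. Qed.
Let DM a b : D (a * b) = D a * D b. Proof. by case: Hh => [[_ [_ H]]]. Qed.
Local Notation pi := (pi HR Hsk).
Local Notation K := (K Hta HR Hsk).
Local Notation degle := (degle Hta HR Hsk).
Local Notation Tw := (Tw Hta HR Hsg Hsk).
Local Notation Twi := (Twi Hta HR Hsg Hsk).
Local Notation KIs := (KIs tp R).
Local Notation G2 := (G2 Hta Hh).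
Local Notation G1 := (G1 Hta Hh).
Local Notation P2 := (P2 Hta Hh).
Local Notation P1 := (P1 Hta Hh).

Lemma K2_tp m u v : K true m (tp u v) = tp u (pi m v).
Proof. exact: (K_tpb Hta HR Hsk true m u v). Qed.
Lemma K1_tp m u v : K false m (tp u v) = tp (pi m u) v.
Proof. exact: (K_tpb Hta HR Hsk false m v u). Qed.
Let Klin b m := K_lin Hta HR Hsk b m.
Let KIs_dom := KIs_dom Hta HR Hsg Hdl Hsk Hdom.
Let K0_KIs := K0_KIs Hta HR Hsk.
Let K_KIs := K_KIs Hta HR Hsk.
Let Tw0 := Tw0 Hta HR Hsg Hsk.
Let Tw_KIs := Tw_KIs Hta HR Hsg Hsk.
Let Twi_KIs := Twi_KIs Hta HR Hsg Hsk.
Let Tw_Twi := Tw_Twi Hta HR Hsg Hsk.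
Let Tw_nz := Tw_nz Hta HR Hsg Hsk.

Lemma D_in_tensor r : r \in R -> exists s : seq (T * T),
  (forall p, p \in s -> (p.1 \in R) && (p.2 \in R)) /\ D r = \sum_(p <- s) tp p.1 p.2.
Proof.
move=> /DR [s [Hs E]]; exists s; split => // p Hp.
by move/allP: Hs => /(_ p Hp).
Qed.

Lemma KIs_seq b (I : eqType) (s : seq I) (G : I -> TT) :
  (forall i, i \in s -> KIs b (G i)) -> KIs b (\sum_(i <- s) G i).
Proof.
elim: s => [|i s IH] H; first by rewrite big_nil; apply: KIs0.
rewrite big_cons; apply: KIs_add; first by apply: H; rewrite inE eqxx.
by apply: IH => j Hj; apply: H; rewrite inE Hj orbT.
Qed.

Lemma mul_tp_sumr u v (s : seq (T * T)) :
  tp u v * \sum_(q <- s) tp q.1 q.2 = \sum_(q <- s) tp (u * q.1) (v * q.2).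
Proof. by rewrite mulr_sumr; apply: eq_bigr => q _; rewrite tpM. Qed.
Lemma mul_tp_suml u v (s : seq (T * T)) :
  (\sum_(q <- s) tp q.1 q.2) * tp u v = \sum_(q <- s) tp (q.1 * u) (q.2 * v).
Proof. by rewrite mulr_suml; apply: eq_bigr => q _; rewrite tpM. Qed.

Lemma G2_KIs w : KIs true w -> KIs true (G2 w).
Proof.
case=> s [Hs ->]; rewrite (lin_sum (G2_lin Hta Hh)); apply: KIs_seq => p Hp.
rewrite [tpb _ _ _]/tpb /= G2_tp.
case: (D_in_tensor (Hs p Hp)) => s' [Hs' ->]; rewrite mul_tp_sumr.
apply: KIs_seq => q Hq; apply: (KIs_tpb tp true).
by rewrite mul1r; case/andP: (Hs' q Hq).
Qed.

Lemma G1_KIs w : KIs false w -> KIs false (G1 w).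
Proof.
case=> s [Hs ->]; rewrite (lin_sum (G1_lin Hta Hh)); apply: KIs_seq => p Hp.
rewrite [tpb _ _ _]/tpb /= G1_tp.
case: (D_in_tensor (Hs p Hp)) => s' [Hs' ->]; rewrite mul_tp_suml.
apply: KIs_seq => q Hq; apply: (KIs_tpb tp false (q.2 * p.1)).
by rewrite mulr1; case/andP: (Hs' q Hq).
Qed.

Lemma K2_P2 m w : K true m (P2 w) = P2 (K true m w).
Proof.
move: w; apply: (tens_ext Ht).
- apply: lin_comp; [exact: Klin | exact: P2_lin].
- apply: lin_comp; [exact: P2_lin | exact: Klin].
by move=> u v; rewrite P2_tp K2_tp K2_tp P2_tp.
Qed.
Lemma K1_P1 m w : K false m (P1 w) = P1 (K false m w).
Proof.
move: w; apply: (tens_ext Ht).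
- apply: lin_comp; [exact: Klin | exact: P1_lin].
- apply: lin_comp; [exact: P1_lin | exact: Klin].
by move=> u v; rewrite P1_tp K1_tp K1_tp P1_tp.
Qed.

Lemma nz_of_K b m w : K b m w != 0 -> w != 0.
Proof. by apply: contraNneq => ->; rewrite (lin0 (Klin b m)). Qed.

Lemma lead2 b (z : TT) m : (2 <= m)%N -> K b m z != 0 ->
  exists N, [/\ (2 <= N)%N, degle b z N & K b N z != 0].
Proof.
move=> Hm Hnz; case: (lead_exists Hta HR Hsk b (nz_of_K Hnz)) => N [HN HKN].
exists N; split => //; rewrite leqNgt; apply/negP => HN2.
by move: Hnz; rewrite HN ?eqxx //; exact: leq_trans HN2 Hm.
Qed.

Lemma core2 m : (2 <= m)%N -> K true m (D x) = 0.
Proof.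
move=> Hm; apply/eqP; apply: contraT => Hnz.
set z := D x in Hnz *.
case: (lead2 Hm Hnz) => N [HN2 HN HKN].
have Erec := recon HN.
have EG : G2 z = \sum_(j < N.+1) G2 (K true j z) * z ^+ j.
  rewrite {1}Erec (lin_sum (G2_lin Hta Hh)); apply: eq_bigr => j _.
  by rewrite [tpb _ _ _]/tpb /= G2_mulr (DX Hh).
have HNN : (N < N * N)%N by rewrite -{1}(muln1 N) ltn_mul2l; case: N HN2 {HN HKN Erec EG}.
have H0 : K true (N * N) (G2 z) = 0.
  by rewrite (I1 Hta H3 Hh) K2_P2 HN // (lin0 (P2_lin Hta Hh)).
have HE : forall j, KIs true (G2 (K true j z)) by move=> j; apply: G2_KIs; exact: K_KIs.
have Hpow := pow_lead Hsg Hdl Hdom HN HKN.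
move: H0; rewrite EG (lin_sum (Klin true _)) big_ord_recr /= big1.
  rewrite add0r => /eqP; apply: contraLR => _.
  have [_ ->] := mulK Hsg Hdl (KIs_degle Hta HR Hsk (HE N)) (Hpow N).1.
  rewrite K0_KIs // Tw0 //.
  apply: (KIs_dom (HE N)); first exact: K_KIs.
    apply: contraTneq isT => E0; move: HKN.
    by rewrite -(G2i_G2 Hta H3 Hh (K true N z)) E0 (lin0 (G2i_lin Hta Hh)) eqxx.
  exact: (Hpow N).2.
move=> j _.
have [H1 _] := mulK Hsg Hdl (KIs_degle Hta HR Hsk (HE j)) (Hpow j).1.
apply: H1; rewrite add0n ltn_mul2r ltn_ord andbT.
exact: leq_trans _ HN2.
Qed.

Lemma degle_pow b (z : TT) M j : degle b z M -> degle b (z ^+ j) (j * M).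
Proof.
move=> HM; elim: j => [|j IH].
  rewrite expr0 mul0n -(tpb11 Hta b) => m Hm; rewrite (K_tpb Hta HR Hsk) (pi_inR HR Hsk m R1).
  by case: m Hm => // m _; rewrite (tpb0r Hta).
by rewrite exprSr mulSn addnC; have [H _] := mulK Hsg Hdl IH HM.
Qed.

Lemma KIs_D r : r \in R -> KIs false (D r).
Proof.
move=> /D_in_tensor [s [Hs ->]]; apply: KIs_seq => p Hp.
apply: (KIs_tpb tp false p.2); by case/andP: (Hs p Hp).
Qed.

Lemma G1_deg M d w : degle false (D x) M -> degle false w d ->
  degle false (G1 w) (d * M).
Proof.
move=> HM /(deg_rep (Hta := Hta)) [s [Hs ->]].
rewrite (lin_sum (G1_lin Hta Hh)) big_seq; apply: degle_sum => p Hp.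
rewrite [tpb _ _ _]/tpb /= (pi_expand_dle (Hs p Hp)) (tp_suml Ht) (lin_sum (G1_lin Hta Hh)).
apply: degle_sum => i _; rewrite G1_tp DM (DX Hh).
have H1 := KIs_degle Hta HR Hsk (KIs_D (piR HR Hsk i p.2)).
have [H2 _] := mulK Hsg Hdl H1 (degle_pow (j := i) HM).
have H3' : KIs false (tp 1 p.1) by apply: (KIs_tpb tp false p.1).
have [H4 _] := mulK Hsg Hdl H2 (KIs_degle Hta HR Hsk H3').
apply: (degle_mono H4); rewrite add0n addn0 leq_mul2r; apply/orP; right.
by rewrite -ltnS ltn_ord.
Qed.

Lemma core1 m : (2 <= m)%N -> K false m (D x) = 0.
Proof.
move=> Hm; apply/eqP; apply: contraT => Hnz.
set z := D x in Hnz *.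
case: (lead2 Hm Hnz) => M [HM2 HM HKM].
set C := K false M z.
have HC : KIs false C := K_KIs false M z.
set C' := Twi false M C.
have HC' : KIs false C' := Twi_KIs M HC.
have ETw : Tw false M C' = C := Tw_Twi M HC.
set X := tp (x ^+ M) 1.
have KX : forall m', K false m' X = if m' == M then 1 else 0.
  move=> m'; rewrite /X K1_tp -(mul1r (x ^+ M)) (pi_mono HR Hsk m' M R1).
  by case: eqP => _; rewrite ?(tp11 Hta) // (tp0l Ht).
have HXdeg : degle false X M.
  by move=> m' Hm'; rewrite KX ifF // gtn_eqF.
have [HXC EXC] := mulK Hsg Hdl HXdeg (KIs_degle Hta HR Hsk HC').
rewrite addn0 K0_KIs // KX eqxx mul1r ETw in EXC HXC.
set z2 := z - X * C'.
have Hz2 : degle false z2 M.-1.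
  move=> m' Hm'; rewrite /z2 (linB (Klin false m')).
  have HMm : (M <= m')%N by rewrite -(prednK (ltnW HM2)).
  case: (eqVneq m' M) => [->|Hne]; first by rewrite EXC subrr.
  have Hlt : (M < m')%N by rewrite ltn_neqAle eq_sym Hne HMm.
  by rewrite HM // HXC // subrr.
have Ez : z = X * C' + z2 by rewrite /z2 addrC subrK.
have EG : G1 z = z ^+ M * G1 C' + G1 z2.
  by rewrite {1}Ez (linD (G1_lin Hta Hh)) /X (G1_mull Hta Hh) (DX Hh).
have HMM : (M < M * M)%N by rewrite -{1}(muln1 M) ltn_mul2l (ltnW HM2).
have H0 : K false (M * M) (G1 z) = 0.
  by rewrite (I3 Hta H3 Hh) K1_P1 HM // (lin0 (P1_lin Hta Hh)).
have Hz2deg := G1_deg HM Hz2.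
have Hpow := pow_lead Hsg Hdl Hdom HM HKM.
have HE : KIs false (G1 C') := G1_KIs HC'.
move: H0; rewrite EG (linD (Klin false _)) (Hz2deg (M * M)) ?addr0; last first.
  by rewrite ltn_mul2r (ltnW HM2) ltn_predL (ltnW HM2).
move=> /eqP; apply: contraLR => _.
rewrite -[(M * M)%N]addn0; have [_ ->] := mulK Hsg Hdl (Hpow M).1 (KIs_degle Hta HR Hsk HE).
rewrite K0_KIs //.
apply: (KIs_dom (K_KIs _ _ _)); first exact: Tw_KIs.
  exact: (Hpow M).2.
apply: Tw_nz => //.
apply: contraTneq isT => E0.
have HC0 : C' = 0 by rewrite -(G1i_G1 Hta H3 Hh C') E0 (lin0 (G1i_lin Hta Hh)).
by move: HKM; rewrite -/C -ETw HC0 (lin0 (Tw_lin Hta HR Hsg Hsk false M)) eqxx.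
Qed.

Lemma K12 i j w : K false i (K true j w) = K true j (K false i w).
Proof.
move: w; apply: (tens_ext Ht).
- apply: lin_comp; exact: Klin.
- apply: lin_comp; exact: Klin.
by move=> u v; rewrite K2_tp !K1_tp K2_tp.
Qed.

Lemma main_sec : exists s t v w,
    [/\ in_tensor tp R s, in_tensor tp R t, in_tensor tp R v, in_tensor tp R w &
        D x = s * tp 1 x + t * tp x 1 + v * tp x x + w].
Proof.
set z := D x.
pose c i j := K false i (K true j z).
have Hc : forall i j, in_tensor tp R (c i j).
  move=> i j; case: (rep Hta true z) => s0 E0.
  exists [seq (pi i p.1, pi j p.2) | p <- s0]; split.
    by apply/allP => p /mapP [q _ ->] /=; rewrite !piR.
  rewrite /c {1}E0 (K_sum Hta HR Hsk true j) (lin_sum (Klin false i)) big_map.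
  by apply: eq_bigr => p _; rewrite [tpb _ _ _]/tpb /= K1_tp.
have E2 := @recon _ _ _ _ _ _ _ _ Hta HR Hsk true z 2 (fun m Hm => core2 Hm).
have Ej : forall j, K true j z = \sum_(i < 2) c i j * tp (x ^+ i) 1.
  move=> j; apply: (@recon _ _ _ _ _ _ _ _ Hta HR Hsk false _ 2) => m Hm.
  by rewrite K12 core1 // (lin0 (Klin true j)).
exists (c 0%N 1%N), (c 1%N 0%N), (c 1%N 1%N), (c 0%N 0%N); split => //.
rewrite {1}E2 !big_ord_recr !big_ord0 /= !add0r !Ej !big_ord_recr !big_ord0 /= !add0r !expr0 !expr1 /tpb /= (tp11 Hta) !mulr1.
rewrite mulrDl -mulrA tpM mulr1 mul1r.
rewrite [RHS]addrC -[LHS]addrA; congr (_ + _); by rewrite addrCA addrA.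
Qed.

End Main.

End MF.
Import MF.


Theorem lemma2p2p1 (F : fieldType) (T TT : algType F) (tp : T -> T -> TT)
    (TTT : lmodType F) (tpL : TT -> T -> TTT) (tpR : T -> TT -> TTT)
    (D : T -> TT) (eps : T -> F) (S : T -> T)
    (R : {pred T}) (sg dl : T -> T) (x : T) :
  is_tensor_algebra tp ->
  is_triple_tensor tp tpL tpR ->
  hopf_algebra tp tpL tpR D eps S ->
  hopf_subalgebra tp D S R ->
  alg_automorphism_on R sg ->
  sigma_derivation_on R sg dl ->
  is_skew_poly R sg dl x ->
  tensor_domain tp R ->
  exists s t v w,
    [/\ in_tensor tp R s, in_tensor tp R t, in_tensor tp R v, in_tensor tp R w &
        D x = s * tp 1 x + t * tp x 1 + v * tp x x + w].
Proof.
move=> Hta H3 Hh Hsub Hsg Hdl Hsk Hdom.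
exact: (main_sec Hta H3 Hh Hsub Hsg Hdl Hsk Hdom).
Qed.
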